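(* Let $w\ge5$ and $n$ be integers, and let $B\subseteq[n-1]$ be a set with largest element $b$ (with $b=0$ if $B$ is empty). If $n\ge w(2b+w^2)$, then there exists a $B$-free $(n,w-1)$ modular Golomb ruler.
   Context: An $(n,w)$ modular Golomb ruler is a set of $w$ elements $\{a_1,\dots,a_w\}\subseteq\mathbb Z_n$ such that all differences $a_i-a_j$ ($1\le i\ne j\le w$), computed in $\mathbb Z_n$, are nonzero and pairwise distinct; this set of differences is its set of differences. For a finite set $B\subseteq[n-1]=\{1,\dots,n-1\}$, a modular Golomb ruler is $B$-free if no element of $B$, viewed as an element of $\mathbb Z_n$, lies in its set of differences. *)

(* Defs.v *)
From mathcomp Require Import all_boot all_algebra.
Set Implicit Arguments. Unset Strict Implicit. Unset Printing Implicit Defensive.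
Import GRing.Theory.
Local Open Scope ring_scope.

Definition diff_set (n : nat) (A : {set 'Z_n}) : {set 'Z_n} :=
  [set x - y | x in A, y in A & x != y].

Definition modular_golomb (n w : nat) (A : {set 'Z_n}) : Prop :=
  #|A| = w /\
  (forall x y, x \in A -> y \in A -> x != y -> x - y != 0) /\
  (forall x y u v, x \in A -> y \in A -> u \in A -> v \in A ->
     x != y -> u != v -> x - y = u - v -> x = u /\ y = v).

Definition B_free (n : nat) (B : seq nat) (A : {set 'Z_n}) : Prop :=
  forall b, b \in B -> (b%:R : 'Z_n) \notin diff_set A.

(* Main.v *)
Require Import Defs.
From mathcomp Require Import all_boot all_algebra.
From mathcomp Require Import zify.

Fixpoint T (k : nat) : nat := if k is k'.+1 then T k' + k' else 0.

Lemma T_add j d : T (j + d) = T j + d * j + T d.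
Proof. elim: d => [|d IH]; first by rewrite /= addn0 mul0n !addn0. rewrite addnS /= IH. lia. Qed.

Lemma T_mono j i : j <= i -> T j <= T i.
Proof. move=> H. have -> : i = j + (i - j) by lia. by rewrite T_add -addnA leq_addr. Qed.

Lemma T2 k : 2 * T k = k * k.-1.
Proof. elim: k => [|k IH] //. rewrite /= mulnDr IH. case: k {IH} => [|k] //. rewrite /=. nia. Qed.

Lemma divmod_uniq L q f q' f' : f < L -> f' < L -> q * L + f = q' * L + f' -> q = q' /\ f = f'.
Proof.
move=> Hf Hf' E.
have HL : 0 < L by lia.
have Hq : (q * L + f) %/ L = q by rewrite divnMDl // divn_small // addn0.
have Hq' : (q' * L + f') %/ L = q' by rewrite divnMDl // divn_small // addn0.
split; first by rewrite -Hq -Hq' E.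
have := f_equal (fun x => x %% L) E; rewrite /= !modnMDl !modn_small //.
Qed.

Lemma core_pos i j k l : j < i -> l < k -> i - j = k - l -> T i - T j = T k - T l -> i = k /\ j = l.
Proof.
move=> Hji Hlk Hd He.
have Ei : i = j + (i - j) by lia.
have Ek : k = l + (k - l) by lia.
move: He; rewrite Ei Ek T_add T_add -Hd.
set d := i - j.
have Hd0 : 0 < d by rewrite /d; lia.
move=> He.
have : d * j = d * l by lia.
move/eqP; rewrite eqn_pmul2l // => /eqP Hjl.
subst. split; lia.
Qed.

Definition a (L i : nat) := i * L + T i.
Definition D (n L i j : nat) := if j <= i then a L i - a L j else n - (a L j - a L i).

Lemma a_lt L i j : 0 < L -> i < j -> a L i < a L j.
Proof. move=> HL Hij. rewrite /a. have := @T_mono _ _ (ltnW Hij). have : i * L < j * L by rewrite ltn_pmul2r. lia. Qed.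

Lemma a_sub L i j : j <= i -> a L i - a L j = (i - j) * L + (T i - T j).
Proof. move=> H. rewrite /a. have := @T_mono _ _ H. have : j * L <= i * L by rewrite leq_mul2r H orbT. rewrite mulnBl. lia. Qed.

Lemma D_decomp n m L r i j : n = m * L + r -> 2 * T m.-1 < r -> r < L -> i < m -> j < m -> i != j ->
  exists q f, [/\ D n L i j = q * L + f, f < L,
     (j < i -> q = i - j /\ f = T i - T j /\ f <= T m.-1) &
     (i < j -> q = m - (j - i) /\ f = r - (T j - T i) /\ T m.-1 < f)].
Proof.
move=> En Hr HL Hi Hj Hij.
have Tm : forall x, x < m -> T x <= T m.-1 by move=> x Hx; apply: T_mono; lia.
rewrite /D; case: ltngtP Hij => // H _.
- have Hle : j <= i by lia.
  rewrite ?Hle a_sub //.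
  have := Tm i Hi; have := @T_mono _ _ Hle => ? ?.
  exists (i - j), (T i - T j); split => //; try lia.
- have Hle : (j <= i) = false by lia.
  rewrite ?Hle a_sub; last by lia.
  have := Tm j Hj; have := @T_mono _ _ (ltnW H) => ? ?.
  exists (m - (j - i)), (r - (T j - T i)); split => //; try lia.
  rewrite En. 
  have : (j - i) * L <= m * L by rewrite leq_mul2r; apply/orP; right; lia.
  rewrite mulnBl. lia.
Qed.

Lemma D_inj n m L r i j k l : n = m * L + r -> 2 * T m.-1 < r -> r < L ->
  i < m -> j < m -> k < m -> l < m -> i != j -> k != l ->
  D n L i j = D n L k l -> i = k /\ j = l.
Proof.
move=> En Hr HL Hi Hj Hk Hl Hij Hkl E.
have [q [f [E1 F1 P1 N1]]] := @D_decomp n m L r i j En Hr HL Hi Hj Hij.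
have [q' [f' [E2 F2 P2 N2]]] := @D_decomp n m L r k l En Hr HL Hk Hl Hkl.
have [Eq Ef] := @divmod_uniq L q f q' f' F1 F2 (etrans (esym E1) (etrans E E2)).
subst q' f'.
case: (ltngtP i j) Hij => // H1 _; case: (ltngtP k l) Hkl => // H2 _.
- have [? [? ?]] := N1 H1; have [? [? ?]] := N2 H2.
  have [? ?] : l - k = j - i /\ T l - T k = T j - T i by lia.
  have [] := @core_pos l k j i H2 H1 => //; lia.
- have [? [? ?]] := N1 H1; have [? [? ?]] := P2 H2. lia.
- have [? [? ?]] := P1 H1; have [? [? ?]] := N2 H2. lia.
- have [? [? ?]] := P1 H1; have [? [? ?]] := P2 H2.
  apply: core_pos => //; lia.
Qed.

Lemma D_lb n m L r i j : n = m * L + r -> 2 * T m.-1 < r -> r < L ->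
  i < m -> j < m -> i != j -> L <= D n L i j.
Proof.
move=> En Hr HL Hi Hj Hij.
have [q [f [E1 F1 P1 N1]]] := @D_decomp n m L r i j En Hr HL Hi Hj Hij.
rewrite E1.
have : 0 < q.
  case: (ltngtP i j) Hij => // H1 _.
  - have [? _] := N1 H1; lia.
  - have [? _] := P1 H1; lia.
case: q {E1 P1 N1} => // q _. rewrite mulSn. lia.
Qed.
Lemma foo (n' : nat) (x y : 'Z_(n'.+2)) : val (x - y)%R = if (val y <= val x) then val x - val y else n'.+2 - (val y - val x).
Proof.
have -> : val (x - y)%R = (val x + (n'.+2 - val y) %% n'.+2) %% n'.+2 by [].
case: x y => [x Hx] [y Hy] /=.
have Hx' : x < n'.+2 := Hx.
have Hy' : y < n'.+2 := Hy.
clear Hx Hy.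
case: ifP => H.
  rewrite modnDmr.
  have -> : x + (n'.+2 - y) = (x - y) + n'.+2 by lia.
  rewrite modnDr modn_small //; lia.
rewrite (modn_small (m := n'.+2 - y)); last by lia.
rewrite modn_small; lia.
Qed.

Theorem lemma2 (w n : nat) (B : seq nat) :
  5 <= w ->
  all (fun x => 0 < x < n) B ->
  n >= w * (2 * (\max_(x <- B) x) + w ^ 2) ->
  exists A : {set 'Z_n}, modular_golomb (w - 1) A /\ B_free B A.
Proof.
move=> Hw HB Hn.
set b := \max_(x <- B) x in Hn.
have Bb : forall x, x \in B -> x <= b.
  by move=> x Hx; exact: (@leq_bigmax_seq nat B xpredT id x Hx isT).
set m := w - 1.
set E := T m.-1.
have E2 : 2 * E = (w - 2) * (w - 3).
  rewrite /E T2 /m. have -> : (w - 1).-1 = w - 2 by lia. have -> : (w - 2).-1 = w - 3 by lia. by [].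
have Hw3 : w ^ 2 * w <= n.
  have : w * w ^ 2 <= w * (2 * b + w ^ 2) by rewrite leq_mul2l leq_addl orbT.
  rewrite mulnC. lia.
have Ew2 : (w - 2) * (w - 3) + w < w ^ 2.
  have -> : w ^ 2 = w * w by rewrite expnS expn1.
  nia.
have HnR : 2 * E + 1 <= n.
  have : w ^ 2 <= w ^ 2 * w by rewrite leq_pmulr //; lia.
  lia.
set R := 2 * E + 1.
set L := (n - R) %/ m. set s := (n - R) %% m.
have Hdiv : n - R = L * m + s := divn_eq (n - R) m.
have Hs : s < m by rewrite /s ltn_pmod // /m; lia.
set r := R + s.
have En : n = m * L + r by rewrite /r mulnC; lia.
have Hr : 2 * E < r by rewrite /r /R; lia.
have Hrw : r + 1 < w ^ 2 by rewrite /r /R; lia.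
have HrL : r < L.
  rewrite ltnNge; apply/negP => HLr.
  have H1 : m * L <= m * r by rewrite leq_mul2l HLr orbT.
  have H2 : w * r < w * w ^ 2 by rewrite ltn_pmul2l; lia.
  have H3 : w * r = m * r + r by rewrite /m -{1}(subnK (_ : 1 <= w)); [rewrite mulnDl mul1n | lia].
  rewrite mulnC in H2. lia.
have HbL : b < L.
  rewrite ltnNge; apply/negP => HLb.
  have H1 : m * L <= m * b by rewrite leq_mul2l HLb orbT.
  have H2 : m * b <= w * (2 * b) by apply: leq_mul; rewrite /m; lia.
  have H4 : w ^ 2 <= w * w ^ 2 by rewrite leq_pmull //; lia.
  have H3 : w * (2 * b) + w * w ^ 2 <= n by rewrite -mulnDr.
  lia.
have HL0 : 0 < L by lia.
have Ha : forall i, i < m -> a L i < n.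
  move=> i Hi. rewrite /a En.
  have H1 : i * L <= (m - 1) * L by rewrite leq_mul2r; apply/orP; right; lia.
  have H2 : T i <= E by apply: T_mono; lia.
  have H3 : m * L = (m - 1) * L + L by rewrite -{1}(subnK (_ : 1 <= m)); [rewrite mulnDl mul1n | lia].
  lia.
have [n' En'] : exists n', n = n'.+2 by exists (n - 2); lia.
clear Hdiv; clearbody L s; move: En; subst n; move=> En.
pose g (i : 'I_m) : 'Z_(n'.+2) := inZp (a L i).
have val_g : forall i, val (g i) = a L i by move=> i; rewrite /= modn_small // Ha.
have a_le : forall i j, (a L j <= a L i) = (j <= i).
  move=> i j; case: (ltngtP j i) => H.
  - exact/ltnW/(a_lt _ _ _ HL0 H).
  - by apply/negbTE; rewrite -ltnNge; apply/(a_lt _ _ _ HL0 H).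
  - by rewrite H leqnn.
have Dval : forall i j, val (g i - g j)%R = D n'.+2 L i j.
  by move=> i j; rewrite foo !val_g a_le.
have g_inj : injective g.
  move=> i j /(congr1 val); rewrite !val_g => Ea; apply/val_inj => /=.
  by case: (ltngtP i j) => // H; have := a_lt _ _ _ HL0 H; rewrite Ea ltnn.
have neq : forall i j, g i != g j -> i != j.
  by move=> i j; apply: contraNN => /eqP ->.
exists [set g i | i : 'I_m]; split; [split; [|split] |].
- by rewrite card_imset // card_ord.
- move=> x y /imsetP[i _ ->] /imsetP[j _ ->] /neq Hij.
  apply/eqP => /(congr1 val); rewrite Dval /=.
  have := @D_lb n'.+2 m L r i j En Hr HrL (ltn_ord i) (ltn_ord j) Hij. lia.
- move=> x y u v /imsetP[i _ ->] /imsetP[j _ ->] /imsetP[k _ ->] /imsetP[l _ ->] /neq Hij /neq Hkl.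
  move=> /(congr1 val); rewrite !Dval => HD.
  have [Hik Hjl] := @D_inj n'.+2 m L r i j k l En Hr HrL (ltn_ord i) (ltn_ord j) (ltn_ord k) (ltn_ord l) Hij Hkl HD.
  by split; congr g; apply/val_inj.
- move=> c Hc; apply/negP => /imset2P[x y Hx]; rewrite inE => /andP[Hy Hxy] Ec.
  move: Hx Hy Hxy Ec => /imsetP[i _ ->] /imsetP[j _ ->] /neq Hij /(congr1 val).
  rewrite Dval. have -> : val (c%:R : 'Z_(n'.+2))%R = c %% n'.+2 by rewrite /= val_Zp_nat.
  have := (allP HB) c Hc => /andP[_ Hcn].
  rewrite modn_small // => Ecd.
  have := @D_lb n'.+2 m L r i j En Hr HrL (ltn_ord i) (ltn_ord j) Hij.
  have := Bb c Hc. lia.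
Qed.
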